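(* Let $G\in\Gamma$ be twin-free. (1) If some vertex of $G$ has degree at least $3$, then $G$ has an induced subgraph isomorphic to one of the three bipartite graphs with biadjacency matrices \[\begin{bmatrix}1&0&0\\1&1&1\\0&0&1\end{bmatrix},\qquad \begin{bmatrix}1&1&0\\1&1&1\\0&1&0\end{bmatrix},\qquad \begin{bmatrix}1&1&0\\1&1&1\\0&1&1\end{bmatrix}.\] (2) If $1<\|G\|<\eta_4$, where $\eta_4=\frac1{15}\sqrt{169+38\sqrt{19}}$, then every vertex of $G$ has degree at most $2$ and some vertex has degree exactly $2$ (i.e. $\deg(G)=2$).
   Context: $\Gamma$ is the collection of all bipartite graphs $G\subseteq R\times C$ with $|R|,|C|\in\{1,2,\dots\}\cup\{\aleph_0\}$; enumerating $R=\{r_i\}$, $C=\{c_j\}$, the biadjacency matrix $M(G)$ has $(i,j)$ entry $1$ if $(r_i,c_j)$ is an edge and $0$ otherwise. $\|G\|$ denotes the Schur norm $\|M(G)\|_\bullet=\sup\{\|M(G)\bullet X\|:\|X\|\le1\}$ (entrywise product, operator norm on $\ell^2$ spaces over $\mathbb F\in\{\mathbb R,\mathbb C\}$; possibly $\infty$). An induced subgraph of $G$ is $G\cap(R_0\times C_0)$ for $R_0\subseteq R$, $C_0\subseteq C$; graphs are considered up to isomorphism, where isomorphisms may swap the two sides of the bipartition. Two vertices are twins if they have the same neighbour sets; $G$ is twin-free if no two distinct vertices are twins. $\deg(G)$ is the maximum vertex degree. *)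

(* Defs.v *)
From HB Require Import structures.
From mathcomp Require Import all_boot all_order all_algebra.
From mathcomp Require Import boolp classical_sets reals constructive_ereal ereal.
From mathcomp Require Import complex.
Set Implicit Arguments.
Unset Strict Implicit.
Unset Printing Implicit Defensive.
Import Order.TTheory GRing.Theory Num.Theory.
Local Open Scope ring_scope.
Local Open Scope classical_set_scope.

(* A bipartite graph G ⊆ R × C is given by two countable (finite or countably
   infinite) vertex types Rv, Cv (assumed nonempty in the theorem) and an
   edge relation E : Rv -> Cv -> bool.  Its biadjacency matrix has entry
   (r,c) equal to 1 iff E r c. *)

Section Norms.
Variables (R : realType) (K : fieldType) (nrm : K -> R) (cj : K -> K).

(* Operator norm (in [0, +oo]) of the matrix A : I x J -> K acting
   ell^2(J) -> ell^2(I): the supremum of |<y, A x>| over finitely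
   supported x, y of ell^2-norm at most 1. *)
Definition opnorm_gen (I J : countType) (A : I -> J -> K) : \bar R :=
  ereal_sup [set e : \bar R | exists (rs : seq I) (cs : seq J)
                                   (y : I -> K) (x : J -> K),
      [/\ uniq rs, uniq cs,
          \sum_(i <- rs) nrm (y i) ^+ 2 <= 1,
          \sum_(j <- cs) nrm (x j) ^+ 2 <= 1 &
          e = (nrm (\sum_(i <- rs) \sum_(j <- cs) cj (y i) * A i j * x j))%:E]].

Definition schur_gen (I J : countType) (E : I -> J -> bool) : \bar R :=
  ereal_sup [set e : \bar R | exists X : I -> J -> K,
      (opnorm_gen X <= 1%:E)%E /\
      e = opnorm_gen (fun i j => if E i j then X i j else 0)].
End Norms.

Definition schur_norm (R : realType) (cplx : bool) (I J : countType)
    (E : I -> J -> bool) : \bar R :=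
  if cplx then schur_gen (@ComplexField.Normc.normc R) (@conjc R) E
  else schur_gen (fun x : R => `|x|) id E.

Definition twin_free (I J : Type) (E : I -> J -> bool) : Prop :=
  (forall r r' : I, (forall c, E r c = E r' c) -> r = r') /\
  (forall c c' : J, (forall r, E r c = E r c') -> c = c').

(* Vertex degree at least k (degrees may be infinite). *)
Definition row_deg_ge (I J : Type) (E : I -> J -> bool) (r : I) (k : nat) :=
  exists f : 'I_k -> J, injective f /\ forall t, E r (f t).
Definition col_deg_ge (I J : Type) (E : I -> J -> bool) (c : J) (k : nat) :=
  exists f : 'I_k -> I, injective f /\ forall t, E (f t) c.

Definition some_deg_ge (I J : Type) (E : I -> J -> bool) (k : nat) : Prop :=
  (exists r, row_deg_ge E r k) \/ (exists c, col_deg_ge E c k).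

Definition maxdeg_eq2 (I J : Type) (E : I -> J -> bool) : Prop :=
  ~ some_deg_ge E 3 /\ some_deg_ge E 2.

Definition mx33 (rows : seq (seq bool)) (i j : 'I_3) : bool :=
  nth false (nth [::] rows i) j.

Definition B1 := mx33 [:: [:: true; false; false];
                          [:: true; true; true];
                          [:: false; false; true]].
Definition B2 := mx33 [:: [:: true; true; false];
                          [:: true; true; true];
                          [:: false; true; false]].
Definition B3 := mx33 [:: [:: true; true; false];
                          [:: true; true; true];
                          [:: false; true; true]].

(* G has an induced subgraph isomorphic to the bipartite graph with
   biadjacency matrix B (isomorphisms may swap the two sides, which
   corresponds to transposing B). *)
Definition has_induced (I J : Type) (E : I -> J -> bool)
    (B : 'I_3 -> 'I_3 -> bool) : Prop :=
  exists (f : 'I_3 -> I) (g : 'I_3 -> J), injective f /\ injective g /\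
    ((forall a b, E (f a) (g b) = B a b) \/
     (forall a b, E (f a) (g b) = B b a)).

Definition eta4 (R : realType) : R :=
  Num.sqrt (169 + 38 * Num.sqrt 19) / 15.

(* Main.v *)
Require Import Defs.
From HB Require Import structures.
From mathcomp Require Import all_boot all_order all_algebra.
From mathcomp Require Import boolp classical_sets reals constructive_ereal ereal.
From mathcomp Require Import complex.
From mathcomp Require Import ring lra.
Import Order.TTheory GRing.Theory Num.Theory.

Module Part1.
Set Implicit Arguments.
Unset Strict Implicit.
Unset Printing Implicit Defensive.

Definition trv (tbl : seq (seq bool)) (k c : nat) := nth false (nth [::] tbl k) c.
Definition Bk (k : nat) := if k == 0%N then B1 else if k == 1%N then B2 else B3.
Definition Btab : seq (seq (seq bool)) :=
 [:: [:: [:: true; false; false]; [:: true; true; true]; [:: false; false; true]];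
    [:: [:: true; true; false]; [:: true; true; true]; [:: false; true; false]];
    [:: [:: true; true; false]; [:: true; true; true]; [:: false; true; true]]].
Definition Bn (k a b : nat) := nth false (nth [::] (nth [::] Btab k) a) b.
Definition rowsc : seq (seq nat) :=
  [seq a :: bc | a <- iota 0 4, bc <- [seq [:: b; c] | b <- iota 0 4, c <- iota 0 4]].
Definition perms3 : seq (seq nat) :=
  [:: [:: 0; 1; 2]; [:: 0; 2; 1]; [:: 1; 0; 2]; [:: 1; 2; 0]; [:: 2; 0; 1]; [:: 2; 1; 0]]%N.
Definition chk (tbl : seq (seq bool)) (rr pp : seq nat) (k : nat) : bool :=
  all (fun a => (nth 0 rr a < 4) && (nth 0 pp a < 3)) (iota 0 3) &&
  all (fun a => all (fun b => trv tbl (nth 0 rr a) (nth 0 pp b) == Bn k a b)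
     (iota 0 3)) (iota 0 3).
Definition cands := [seq (w.1, w.2.1, w.2.2) | w <- [seq (rr, w) | rr <- rowsc,
   w <- [seq (pp, k) | pp <- perms3, k <- iota 0 3]]].
Definition findw tbl := ohead [seq w <- cands | chk tbl w.1.1 w.1.2 w.2].

Lemma findw_ok (x1 x2 x3 x4 x5 x6 x7 x8 x9 : bool) :
  x1 != x2 -> x4 != x6 -> x8 != x9 ->
  findw [:: [:: true; true; true]; [:: x1; x2; x3]; [:: x4; x5; x6]; [:: x7; x8; x9]] != None.
Proof.
(case: x1; case: x2; case: x3; case: x4; case: x5; case: x6; case: x7; case: x8; case: x9).
all: vm_compute. all: intros; (reflexivity || discriminate).
Qed.

Lemma Bn_Bk (k : nat) (a b : 'I_3) : (k < 3)%N -> Bk k a b = Bn k a b.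
Proof.
by case: k => [|[|[|k]]] // _; case: a => [[|[|[|a]]] Ha] //; case: b => [[|[|[|b]]] Hb].
Qed.

Lemma Bn_rows k (a a' : nat) : (k < 3)%N -> (a < 3)%N -> (a' < 3)%N ->
  Bn k a 0 = Bn k a' 0 -> Bn k a 1 = Bn k a' 1 -> Bn k a 2 = Bn k a' 2 -> a = a'.
Proof. by case: k => [|[|[|k]]] //; case: a => [|[|[|a]]] //; case: a' => [|[|[|a']]]. Qed.

Lemma Bn_cols k (a a' : nat) : (k < 3)%N -> (a < 3)%N -> (a' < 3)%N ->
  Bn k 0 a = Bn k 0 a' -> Bn k 1 a = Bn k 1 a' -> Bn k 2 a = Bn k 2 a' -> a = a'.
Proof. by case: k => [|[|[|k]]] //; case: a => [|[|[|a]]] //; case: a' => [|[|[|a']]]. Qed.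

Lemma Bk_rows (k : nat) (a a' : 'I_3) : (k < 3)%N -> (forall b, Bk k a b = Bk k a' b) -> a = a'.
Proof.
move=> k3 H; apply: val_inj; apply: (Bn_rows k3 (ltn_ord a) (ltn_ord a')).
- by have := H (inord 0); rewrite !Bn_Bk ?inordK.
- by have := H (inord 1); rewrite !Bn_Bk ?inordK.
- by have := H (inord 2); rewrite !Bn_Bk ?inordK.
Qed.

Lemma Bk_cols (k : nat) (b b' : 'I_3) : (k < 3)%N -> (forall a, Bk k a b = Bk k a b') -> b = b'.
Proof.
move=> k3 H; apply: val_inj; apply: (Bn_cols k3 (ltn_ord b) (ltn_ord b')).
- by have := H (inord 0); rewrite !Bn_Bk ?inordK.
- by have := H (inord 1); rewrite !Bn_Bk ?inordK.
- by have := H (inord 2); rewrite !Bn_Bk ?inordK.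
Qed.

Lemma has_induced_Bk (I J : Type) (E : I -> J -> bool) (k : nat) :
  (k < 3)%N -> has_induced E (Bk k) -> has_induced E B1 \/ has_induced E B2 \/ has_induced E B3.
Proof. by rewrite /Bk; case: k => [|[|[|k]]] //= _ H; auto. Qed.

Lemma sep_row (I J : Type) (E : I -> J -> bool)
  (tfC : forall c c' : J, (forall r, E r c = E r c') -> c = c') (c c' : J) :
  c <> c' -> exists s, E s c != E s c'.
Proof.
move=> neq; apply: contrapT => H; apply: neq; apply: tfC => s.
apply/eqP; apply: contrapT => H'; apply: H; by exists s; apply/negP.
Qed.

Lemma part1_row (I J : Type) (E : I -> J -> bool)
  (tfC : forall c c' : J, (forall r, E r c = E r c') -> c = c') (r : I) :
  row_deg_ge E r 3 -> has_induced E B1 \/ has_induced E B2 \/ has_induced E B3.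
Proof.
move=> [f [finj fE]].
have d01 : f (inord 0) <> f (inord 1) by move/finj/(congr1 (@nat_of_ord 3)); rewrite !inordK.
have d02 : f (inord 0) <> f (inord 2) by move/finj/(congr1 (@nat_of_ord 3)); rewrite !inordK.
have d12 : f (inord 1) <> f (inord 2) by move/finj/(congr1 (@nat_of_ord 3)); rewrite !inordK.
have [s1 H1] := sep_row tfC d01.
have [s2 H2] := sep_row tfC d02.
have [s3 H3] := sep_row tfC d12.
set tbl := [:: [:: true; true; true];
   [:: E s1 (f (inord 0)); E s1 (f (inord 1)); E s1 (f (inord 2))];
   [:: E s2 (f (inord 0)); E s2 (f (inord 1)); E s2 (f (inord 2))];
   [:: E s3 (f (inord 0)); E s3 (f (inord 1)); E s3 (f (inord 2))]].
have Hne : findw tbl != None := @findw_ok _ _ _ _ _ _ _ _ _ H1 H2 H3.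
case Hw: (findw tbl) Hne => [[[rr pp] k]|]; last by rewrite eqxx.
move=> _.
have : chk tbl rr pp k /\ (k < 3)%N.
  move: Hw; rewrite /findw; case Hs: [seq _ <- _ | _] => [|w s] //= [Ew].
  have : w \in [seq w <- cands | chk tbl w.1.1 w.1.2 w.2] by rewrite Hs inE eqxx.
  rewrite mem_filter Ew => /andP[-> wc]; split => //.
  have : all (fun w : seq nat * seq nat * nat => (w.2 < 3)%N) cands by vm_compute.
  by move/allP/(_ _ wc).
rewrite /chk => -[/andP[/allP bnd /allP eqs] k3].
set rows := nth r [:: r; s1; s2; s3].
have Erows : forall kk cc, (kk < 4)%N -> (cc < 3)%N -> E (rows kk) (f (inord cc)) = trv tbl kk cc.
  by move=> [|[|[|[|kk]]]] // [|[|[|cc]]] //= _ _; rewrite fE.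
pose f' := fun a : 'I_3 => rows (nth 0%N rr a).
pose g' := fun b : 'I_3 => f (inord (nth 0%N pp b)).
have pat : forall a b, E (f' a) (g' b) = Bk k a b.
  move=> a b.
  have /andP[ra _] := bnd a (ltac:(by rewrite mem_iota /=)).
  have /andP[_ pb] := bnd b (ltac:(by rewrite mem_iota /=)).
  rewrite /f' /g' Erows // Bn_Bk //.
  have := allP (eqs a (ltac:(by rewrite mem_iota /=))) b (ltac:(by rewrite mem_iota /=)).
  by move/eqP.
apply: (@has_induced_Bk _ _ _ k) => //.
exists f', g'; split; [|split; [|left; exact: pat]].
- by move=> a a' e; apply: (@Bk_rows k) => // b; rewrite -!pat e.
- by move=> b b' e; apply: (@Bk_cols k) => // a; rewrite -!pat e.
Qed.

Lemma part1 (I J : Type) (E : I -> J -> bool) :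
  twin_free E -> some_deg_ge E 3 ->
  has_induced E B1 \/ has_induced E B2 \/ has_induced E B3.
Proof.
move=> [tfR tfC] [[r Hr]|[c Hc]]; first exact: part1_row Hr.
have tfC' : forall c c' : I, (forall r, E c r = E c' r) -> c = c' by [].
have := @part1_row J I (fun c r => E r c) tfC' c Hc.
have T : forall B, has_induced (fun c r => E r c) B -> has_induced E B.
  move=> B [f [g [fi [gi [H|H]]]]]; exists g, f; do 2 split => //; by [right | left].
by case=> [/T|[/T|/T]]; auto.
Qed.

End Part1.
Import Part1.

Module Part2.
Set Implicit Arguments.
Unset Strict Implicit.
Unset Printing Implicit Defensive.
Local Open Scope ring_scope.

Definition o0 : 'I_3 := Ordinal (isT : (0 < 3)%N).
Definition o1 : 'I_3 := Ordinal (isT : (1 < 3)%N).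
Definition o2 : 'I_3 := Ordinal (isT : (2 < 3)%N).

Lemma sum3 (V : nmodType) (F : 'I_3 -> V) : \sum_(a < 3) F a = F o0 + F o1 + F o2.
Proof.
rewrite !big_ord_recr big_ord0 /= add0r.
by congr (F _ + F _ + F _); apply: val_inj.
Qed.

Definition Umx (R : realType) (c e : R) (a b : 'I_3) : R :=
  nth 0 (nth [::] [:: [:: (1 + c) / 2; - e; (c - 1) / 2]; [:: e; c; e];
                      [:: (c - 1) / 2; - e; (1 + c) / 2]] a) b.

Section Real3.
Variable R : realType.

Lemma cs3 (p0 p1 p2 q0 q1 q2 M0 M1 M2 N0 N1 N2 : R) :
  (p0 * M0 + q0 * N0 + (p1 * M1 + q1 * N1) + (p2 * M2 + q2 * N2)) ^+ 2 +
  (p0 * N0 - q0 * M0 + (p1 * N1 - q1 * M1) + (p2 * N2 - q2 * M2)) ^+ 2 <=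
  (p0 ^+ 2 + q0 ^+ 2 + (p1 ^+ 2 + q1 ^+ 2) + (p2 ^+ 2 + q2 ^+ 2)) *
  (M0 ^+ 2 + N0 ^+ 2 + (M1 ^+ 2 + N1 ^+ 2) + (M2 ^+ 2 + N2 ^+ 2)).
Proof.
have h01 := sqr_ge0 (p0 * M1 - q0 * N1 - p1 * M0 + q1 * N0).
have h01' := sqr_ge0 (p0 * N1 + q0 * M1 - p1 * N0 - q1 * M0).
have h02 := sqr_ge0 (p0 * M2 - q0 * N2 - p2 * M0 + q2 * N0).
have h02' := sqr_ge0 (p0 * N2 + q0 * M2 - p2 * N0 - q2 * M0).
have h12 := sqr_ge0 (p1 * M2 - q1 * N2 - p2 * M1 + q2 * N1).
have h12' := sqr_ge0 (p1 * N2 + q1 * M2 - p2 * N1 - q2 * M1).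
set L := (_ + _)%R; set Rr := (_ * _)%R.
have -> : Rr = L + ((p0 * M1 - q0 * N1 - p1 * M0 + q1 * N0) ^+ 2 +
  (p0 * N1 + q0 * M1 - p1 * N0 - q1 * M0) ^+ 2 +
  (p0 * M2 - q0 * N2 - p2 * M0 + q2 * N0) ^+ 2 +
  (p0 * N2 + q0 * M2 - p2 * N0 - q2 * M0) ^+ 2 +
  (p1 * M2 - q1 * N2 - p2 * M1 + q2 * N1) ^+ 2 +
  (p1 * N2 + q1 * M2 - p2 * N1 - q2 * M1) ^+ 2) by rewrite /L /Rr; ring.
by rewrite lerDl !addr_ge0.
Qed.

Lemma orth3 (c e m0 m1 m2 : R) : c ^+ 2 + 2 * e ^+ 2 = 1 ->
  ((1 + c) / 2 * m0 + - e * m1 + (c - 1) / 2 * m2) ^+ 2 +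
  (e * m0 + c * m1 + e * m2) ^+ 2 +
  ((c - 1) / 2 * m0 + - e * m1 + (1 + c) / 2 * m2) ^+ 2 = m0 ^+ 2 + m1 ^+ 2 + m2 ^+ 2.
Proof.
move=> H.
have -> : ((1 + c) / 2 * m0 + - e * m1 + (c - 1) / 2 * m2) ^+ 2 +
  (e * m0 + c * m1 + e * m2) ^+ 2 +
  ((c - 1) / 2 * m0 + - e * m1 + (1 + c) / 2 * m2) ^+ 2 =
  m0 ^+ 2 + m1 ^+ 2 + m2 ^+ 2 + (c ^+ 2 + 2 * e ^+ 2 - 1) * ((m0 + m2) ^+ 2 / 2 + m1 ^+ 2).
  by field.
by rewrite H subrr mul0r addr0.
Qed.
Lemma real_key (c e : R) (p q m n : 'I_3 -> R) : c ^+ 2 + 2 * e ^+ 2 = 1 ->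
  \sum_a (p a ^+ 2 + q a ^+ 2) <= 1 -> \sum_b (m b ^+ 2 + n b ^+ 2) <= 1 ->
  (\sum_a \sum_b Umx c e a b * (p a * m b + q a * n b)) ^+ 2 +
  (\sum_a \sum_b Umx c e a b * (p a * n b - q a * m b)) ^+ 2 <= 1.
Proof.
move=> Hce Hp Hm; rewrite !sum3 in Hp Hm.
set A := \sum_(a < 3) \sum_(b < 3) Umx c e a b * (p a * m b + q a * n b).
set B := \sum_(a < 3) \sum_(b < 3) Umx c e a b * (p a * n b - q a * m b).
set M0 := (1 + c) / 2 * m o0 + - e * m o1 + (c - 1) / 2 * m o2.
set M1 := e * m o0 + c * m o1 + e * m o2.
set M2 := (c - 1) / 2 * m o0 + - e * m o1 + (1 + c) / 2 * m o2.
set N0 := (1 + c) / 2 * n o0 + - e * n o1 + (c - 1) / 2 * n o2.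
set N1 := e * n o0 + c * n o1 + e * n o2.
set N2 := (c - 1) / 2 * n o0 + - e * n o1 + (1 + c) / 2 * n o2.
have eA : A = p o0 * M0 + q o0 * N0 + (p o1 * M1 + q o1 * N1) + (p o2 * M2 + q o2 * N2).
  by rewrite /A !sum3 /Umx /= /M0 /M1 /M2 /N0 /N1 /N2; ring.
have eB : B = p o0 * N0 - q o0 * M0 + (p o1 * N1 - q o1 * M1) + (p o2 * N2 - q o2 * M2).
  by rewrite /B !sum3 /Umx /= /M0 /M1 /M2 /N0 /N1 /N2; ring.
have hcs := cs3 (p o0) (p o1) (p o2) (q o0) (q o1) (q o2) M0 M1 M2 N0 N1 N2.
have oM : M0 ^+ 2 + M1 ^+ 2 + M2 ^+ 2 = m o0 ^+ 2 + m o1 ^+ 2 + m o2 ^+ 2 :=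
  orth3 (m o0) (m o1) (m o2) Hce.
have oN : N0 ^+ 2 + N1 ^+ 2 + N2 ^+ 2 = n o0 ^+ 2 + n o1 ^+ 2 + n o2 ^+ 2 :=
  orth3 (n o0) (n o1) (n o2) Hce.
rewrite eA eB; apply: (le_trans hcs).
have -> : M0 ^+ 2 + N0 ^+ 2 + (M1 ^+ 2 + N1 ^+ 2) + (M2 ^+ 2 + N2 ^+ 2) =
  m o0 ^+ 2 + n o0 ^+ 2 + (m o1 ^+ 2 + n o1 ^+ 2) + (m o2 ^+ 2 + n o2 ^+ 2).
  transitivity ((M0 ^+ 2 + M1 ^+ 2 + M2 ^+ 2) + (N0 ^+ 2 + N1 ^+ 2 + N2 ^+ 2)); first by ring.
  by rewrite oM oN; ring.
set P := _ + _ + _ in Hp *; set Q := _ + _ + _ in Hm *.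
have P0 : 0 <= P by rewrite /P !addr_ge0 ?sqr_ge0.
have Q0 : 0 <= Q by rewrite /Q !addr_ge0 ?sqr_ge0.
by rewrite -[1]mulr1 ler_pM.
Qed.
End Real3.

Local Open Scope complex_scope.
Notation cRe := (@complex.Re _).
Notation cIm := (@complex.Im _).

Section Cplx3.
Variable R : realType.

Lemma normc_sqr (z : R[i]) : Normc.normc z ^+ 2 = cRe z ^+ 2 + cIm z ^+ 2.
Proof. by case: z => a b /=; rewrite sqr_sqrtr // addr_ge0 ?sqr_ge0. Qed.

Lemma termE (u : R) (z w : R[i]) : conjc z * u%:C * w =
  (u * (cRe z * cRe w + cIm z * cIm w)) +i* (u * (cRe z * cIm w - cIm z * cRe w)).
Proof.
case: z => a b; case: w => c d; simpc; apply/eqP; rewrite eq_complex /=.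
by apply/andP; split; apply/eqP; ring.
Qed.

Lemma sumE n (f g : 'I_n -> R) : \sum_(i < n) (f i +i* g i) = (\sum_i f i) +i* (\sum_i g i).
Proof.
elim: n f g => [|n IH] f g; first by rewrite !big_ord0.
by rewrite !big_ord_recr /= IH; simpc.
Qed.

Lemma H3C (c e : R) : c ^+ 2 + 2 * e ^+ 2 = 1 -> forall y x : 'I_3 -> R[i],
  \sum_a Normc.normc (y a) ^+ 2 <= 1 -> \sum_b Normc.normc (x b) ^+ 2 <= 1 ->
  Normc.normc (\sum_a \sum_b conjc (y a) * (Umx c e a b)%:C * x b) <= 1.
Proof.
move=> Hce y x Hy Hx.
under eq_bigr do under eq_bigr do rewrite termE.
under eq_bigr do rewrite sumE.
rewrite sumE /= -sqrtr1 ler_sqrt //.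
rewrite (eq_bigr _ (fun a _ => normc_sqr (y a))) in Hy.
rewrite (eq_bigr _ (fun a _ => normc_sqr (x a))) in Hx.
exact: (real_key Hce Hy Hx).
Qed.
End Cplx3.


End Part2.
Import Part2.

Module Part3.
Set Implicit Arguments.
Unset Strict Implicit.
Unset Printing Implicit Defensive.
Local Open Scope ring_scope.

Lemma sum_pred1_seq (T : eqType) (V : nmodType) (s : seq T) (k : T) (F : T -> V) :
  uniq s -> \sum_(i <- s) (if i == k then F i else 0) = if k \in s then F k else 0.
Proof.
elim: s => [|a s IH] /=; first by rewrite big_nil.
move=> /andP[an us]; rewrite big_cons IH // inE.
case: (eqVneq a k) => [<-|ak] /=; last by rewrite add0r.
by rewrite (negPf an) addr0.
Qed.

Section Gen.
Variables (R : realType) (K : fieldType) (nrm : K -> R) (cj : K -> K)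
  (emb : {rmorphism R -> K}).
Hypotheses (nrm_ge0 : forall z, 0 <= nrm z) (nrmM : forall a b, nrm (a * b) = nrm a * nrm b)
  (nrmD : forall a b, nrm (a + b) <= nrm a + nrm b) (nrm0 : nrm 0 = 0)
  (nrm_cj : forall z, nrm (cj z) = nrm z) (cj0 : cj 0 = 0) (cj1 : cj 1 = 1)
  (cj_emb : forall r, cj (emb r) = emb r) (nrm_emb : forall r, nrm (emb r) = `|r|)
  (H3 : forall c e : R, c ^+ 2 + 2 * e ^+ 2 = 1 -> forall y x : 'I_3 -> K,
     \sum_a nrm (y a) ^+ 2 <= 1 -> \sum_b nrm (x b) ^+ 2 <= 1 ->
     nrm (\sum_a \sum_b cj (y a) * emb (Umx c e a b) * x b) <= 1).

Lemma nrm1 : nrm 1 = 1.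
Proof. by rewrite -(rmorph1 emb) nrm_emb normr1. Qed.

Lemma nrm_sum (T : Type) (s : seq T) (F : T -> K) :
  nrm (\sum_(i <- s) F i) <= \sum_(i <- s) nrm (F i).
Proof.
elim: s => [|a s IH]; first by rewrite !big_nil nrm0.
by rewrite !big_cons; apply: (le_trans (nrmD _ _)); rewrite lerD2l.
Qed.

Section Ext.
Variables (I J : countType) (f : 'I_3 -> I) (g : 'I_3 -> J).
Hypotheses (fi : injective f) (gi : injective g).

Definition Xe (X : 'I_3 -> 'I_3 -> R) (i : I) (j : J) : K :=
  \sum_a \sum_b (if (i == f a) && (j == g b) then emb (X a b) else 0).

Lemma sum_inj_le (T : eqType) (h : 'I_3 -> T) (hi : injective h) (s : seq T) (F : T -> R) :
  uniq s -> (forall t, 0 <= F t) ->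
  \sum_a (if h a \in s then F (h a) else 0) <= \sum_(t <- s) F t.
Proof.
move=> us F0.
have -> : \sum_a (if h a \in s then F (h a) else 0) =
    \sum_(t <- s) \sum_a (if t == h a then F t else 0).
  rewrite exchange_big /=; apply: eq_bigr => a _.
  by rewrite -sum_pred1_seq.
apply: ler_sum => t _.
case: (boolp.pselect (exists a, h a = t)) => [[a0 <-]|N].
  rewrite (bigD1 a0) //= eqxx big1 ?addr0 // => a ne.
  by rewrite (inj_eq hi) eq_sym (negPf ne).
rewrite big1 // => a _; case: eqP => // ta; exfalso; apply: N; by exists a.
Qed.

Lemma bil (T1 T2 : Type) (rs : seq T1) (cs : seq T2) (F : T1 -> 'I_3 -> K)
  (G : 'I_3 -> 'I_3 -> K) (H : 'I_3 -> T2 -> K) :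
  \sum_(i <- rs) \sum_(j <- cs) \sum_a \sum_b F i a * G a b * H b j =
  \sum_a \sum_b (\sum_(i <- rs) F i a) * G a b * (\sum_(j <- cs) H b j).
Proof.
transitivity (\sum_(i <- rs) \sum_a \sum_(j <- cs) \sum_b F i a * G a b * H b j).
  by apply: eq_bigr => i _; exact: exchange_big.
rewrite exchange_big; apply: eq_bigr => a _.
transitivity (\sum_(i <- rs) \sum_b \sum_(j <- cs) F i a * G a b * H b j).
  by apply: eq_bigr => i _; exact: exchange_big.
rewrite exchange_big; apply: eq_bigr => b _.
rewrite mulr_suml mulr_suml; apply: eq_bigr => i _; by rewrite mulr_sumr.
Qed.

Lemma opnorm_Xe (c e : R) : c ^+ 2 + 2 * e ^+ 2 = 1 ->
  (opnorm_gen nrm cj (Xe (Umx c e)) <= 1%:E)%E.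
Proof.
move=> Hce.
apply: ge_ereal_sup => z [rs [cs [y [x [urs ucs Hy Hx ->]]]]]; rewrite lee_fin.
pose y' a := if f a \in rs then y (f a) else 0.
pose x' b := if g b \in cs then x (g b) else 0.
have -> : \sum_(i <- rs) \sum_(j <- cs) cj (y i) * Xe (Umx c e) i j * x j =
    \sum_a \sum_b cj (y' a) * emb (Umx c e a b) * x' b.
  transitivity (\sum_(i <- rs) \sum_(j <- cs) \sum_a \sum_b
      (if i == f a then cj (y i) else 0) * emb (Umx c e a b) * (if j == g b then x j else 0)).
    apply: eq_bigr => i _; apply: eq_bigr => j _.
    rewrite /Xe mulr_sumr mulr_suml; apply: eq_bigr => a _.
    rewrite mulr_sumr mulr_suml; apply: eq_bigr => b _.
    by case: (i == f a); case: (j == g b); rewrite /= ?mulr0 ?mul0r.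
  rewrite bil; apply: eq_bigr => a _; apply: eq_bigr => b _.
  rewrite sum_pred1_seq // sum_pred1_seq // /y' /x'.
  by case: (f a \in rs); case: (g b \in cs); rewrite ?cj0 ?mulr0 ?mul0r.
apply: H3 => //.
- apply: le_trans Hy.
  have := @sum_inj_le _ f fi rs (fun i => nrm (y i) ^+ 2) urs (fun t => sqr_ge0 _).
  apply: le_trans; apply: ler_sum => a _; rewrite /y'.
  by case: (f a \in rs); rewrite ?nrm0 ?expr0n.
- apply: le_trans Hx.
  have := @sum_inj_le _ g gi cs (fun i => nrm (x i) ^+ 2) ucs (fun t => sqr_ge0 _).
  apply: le_trans; apply: ler_sum => a _; rewrite /x'.
  by case: (g a \in cs); rewrite ?nrm0 ?expr0n.
Qed.

Lemma sum_enum3 (V : nmodType) (F : 'I_3 -> V) : \sum_(a <- enum 'I_3) F a = \sum_a F a.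
Proof. by rewrite big_enum /=. Qed.

Lemma sum_if_eq (T : eqType) (h : 'I_3 -> T) (hi : injective h) (a : 'I_3) (F : 'I_3 -> K) :
  \sum_a' (if h a == h a' then F a' else 0) = F a.
Proof.
rewrite (bigD1 a) //= eqxx big1 ?addr0 // => a' ne.
by rewrite (inj_eq hi) eq_sym (negPf ne).
Qed.

Lemma LB (E : I -> J -> bool) (c e : R) (y x : 'I_3 -> R) : c ^+ 2 + 2 * e ^+ 2 = 1 ->
  \sum_a y a ^+ 2 <= 1 -> \sum_b x b ^+ 2 <= 1 ->
  ((\sum_a \sum_b y a * (if E (f a) (g b) then Umx c e a b else 0) * x b)%:E
     <= schur_gen nrm cj E)%E.
Proof.
move=> Hce Hy Hx.
apply: le_ereal_sup_tmp.
exists (opnorm_gen nrm cj (fun i j => if E i j then Xe (Umx c e) i j else 0)).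
  by exists (Xe (Umx c e)); split => //; exact: opnorm_Xe.
apply: le_ereal_sup_tmp.
pose yv (i : I) := \sum_a (if i == f a then emb (y a) else 0).
pose xv (j : J) := \sum_b (if j == g b then emb (x b) else 0).
have yvE : forall a, yv (f a) = emb (y a).
  move=> a; rewrite /yv (bigD1 a) //= eqxx big1 ?addr0 // => a' ne.
  by rewrite (inj_eq fi) eq_sym (negPf ne).
have xvE : forall b, xv (g b) = emb (x b).
  move=> b; rewrite /xv (bigD1 b) //= eqxx big1 ?addr0 // => b' ne.
  by rewrite (inj_eq gi) eq_sym (negPf ne).
have XeE : forall a b, Xe (Umx c e) (f a) (g b) = emb (Umx c e a b).
  move=> a b; rewrite /Xe.
  transitivity (\sum_a' (if f a == f a' then
     \sum_b' (if g b == g b' then emb (Umx c e a' b') else 0) else 0)).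
    apply: eq_bigr => a' _; case: (f a == f a') => //=.
    by rewrite big1.
  by rewrite (sum_if_eq fi) (sum_if_eq gi).
exists (nrm (\sum_(i <- map f (enum 'I_3)) \sum_(j <- map g (enum 'I_3))
   cj (yv i) * (if E i j then Xe (Umx c e) i j else 0) * xv j))%:E.
  exists (map f (enum 'I_3)), (map g (enum 'I_3)), yv, xv; split => //.
  - by rewrite map_inj_uniq // enum_uniq.
  - by rewrite map_inj_uniq // enum_uniq.
  - rewrite big_map sum_enum3 (eq_bigr (fun a => y a ^+ 2)) // => a _.
    by rewrite yvE nrm_emb real_normK ?num_real.
  - rewrite big_map sum_enum3 (eq_bigr (fun a => x a ^+ 2)) // => a _.
    by rewrite xvE nrm_emb real_normK ?num_real.
rewrite lee_fin big_map sum_enum3.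
have -> : \sum_a \sum_(j <- map g (enum 'I_3)) cj (yv (f a)) *
   (if E (f a) j then Xe (Umx c e) (f a) j else 0) * xv j
   = emb (\sum_a \sum_b y a * (if E (f a) (g b) then Umx c e a b else 0) * x b).
  rewrite rmorph_sum; apply: eq_bigr => a _; rewrite big_map sum_enum3 rmorph_sum.
  apply: eq_bigr => b _.
  rewrite yvE xvE cj_emb XeE !rmorphM; case: (E (f a) (g b)) => //.
  by rewrite rmorph0.
by rewrite nrm_emb ler_norm.
Qed.
End Ext.

Lemma entry_le (I J : countType) (X : I -> J -> K) :
  (opnorm_gen nrm cj X <= 1%:E)%E -> forall i j, nrm (X i j) <= 1.
Proof.
move=> H i j; rewrite -lee_fin; apply: le_trans H.
apply: ereal_sup_ubound; exists [:: i], [:: j], (fun _ => 1), (fun _ => 1).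
by split => //; rewrite ?big_seq1 ?nrm1 ?expr1n // cj1 mul1r mulr1.
Qed.

Lemma count_le1 (T : eqType) (s : seq T) (P : pred T) : uniq s ->
  (forall t t', P t -> P t' -> t = t') -> \sum_(t <- s) (if P t then 1 else 0 : R) <= 1.
Proof.
elim: s => [|a s IH] /=; first by rewrite big_nil ler01.
move=> /andP[an us] Hu; rewrite big_cons; case Pa: (P a); last by rewrite add0r IH.
rewrite big1_seq ?addr0 // => t /andP[_ ts]; case Pt: (P t) => //.
by move: ts; rewrite -(Hu _ _ Pa Pt) (negPf an).
Qed.

Lemma half_bound (T1 T2 : eqType) (rs : seq T1) (cs : seq T2) (P : T1 -> T2 -> bool)
  (A : T1 -> R) : (forall i, 0 <= A i) -> \sum_(i <- rs) A i <= 1 ->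
  (forall i j j', P i j -> P i j' -> j = j') -> uniq cs ->
  \sum_(i <- rs) \sum_(j <- cs) (if P i j then A i / 2 else 0) <= 1 / 2.
Proof.
move=> A0 HA HP ucs.
apply: (@le_trans _ _ (\sum_(i <- rs) A i / 2)).
  apply: ler_sum => i _.
  have -> : \sum_(j <- cs) (if P i j then A i / 2 else 0) =
      A i / 2 * \sum_(j <- cs) (if P i j then 1 else 0).
    by rewrite mulr_sumr; apply: eq_bigr => j _; case: (P i j); rewrite ?mulr1 ?mulr0.
  rewrite -[leRHS]mulr1 ler_wpM2l ?divr_ge0 //.
  by apply: count_le1 => // j j'; apply: HP.
by rewrite -mulr_suml ler_wpM2r.
Qed.

Lemma MB (I J : countType) (E : I -> J -> bool) :
  (forall i j j', E i j -> E i j' -> j = j') -> (forall i i' j, E i j -> E i' j -> i = i') ->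
  (schur_gen nrm cj E <= 1%:E)%E.
Proof.
move=> HR HC.
apply: ge_ereal_sup => z [X [HX ->]].
apply: ge_ereal_sup => z' [rs [cs [y [x [urs ucs Hy Hx ->]]]]]; rewrite lee_fin.
have Xle := entry_le HX.
apply: le_trans (nrm_sum _ _) _.
apply: (@le_trans _ _ (\sum_(i <- rs) \sum_(j <- cs)
   ((if E i j then nrm (y i) ^+ 2 / 2 else 0) + (if E i j then nrm (x j) ^+ 2 / 2 else 0)))).
  apply: ler_sum => i _; apply: le_trans (nrm_sum _ _) _; apply: ler_sum => j _.
  case: (E i j); last by rewrite mulr0 mul0r nrm0 addr0.
  rewrite !nrmM nrm_cj.
  have := Xle i j; have := nrm_ge0 (y i); have := nrm_ge0 (x j); have := nrm_ge0 (X i j).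
  have := sqr_ge0 (nrm (y i) - nrm (x j)).
  set a := nrm (y i); set b := nrm (x j); set t := nrm (X i j) => h1 h2 h3 h4 h5.
  have : a * t * b <= a * b by rewrite -mulrA ler_wpM2l // ler_piMl.
  move=> h6; apply: le_trans h6 _.
  rewrite -mulrDl ler_pdivlMr //; lra.
under eq_bigr => i _ do rewrite big_split.
rewrite big_split /= [X in _ <= X](_ : 1 = 1 / 2 + 1 / 2); last by field.
apply: lerD.
  apply: half_bound => //; first by move=> i; exact: sqr_ge0.
rewrite exchange_big /=.
apply: half_bound => //; first by move=> i; exact: sqr_ge0.
by move=> j i i' h h'; apply: HC h h'.
Qed.
End Gen.

End Part3.
Import Part3.

Module Part4.
Set Implicit Arguments.
Unset Strict Implicit.
Unset Printing Implicit Defensive.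
Local Open Scope ring_scope.

Section Wit.
Variable R : realType.

Definition Wit (M : 'I_3 -> 'I_3 -> bool) (eta : R) :=
  exists (sg tu : 'I_3 -> 'I_3) (c e : R) (y x : 'I_3 -> R),
   [/\ injective sg /\ injective tu, c ^+ 2 + 2 * e ^+ 2 = 1,
       \sum_a y a ^+ 2 <= 1, \sum_b x b ^+ 2 <= 1 &
       eta <= \sum_a \sum_b y a * (if M (sg a) (tu b) then Umx c e a b else 0) * x b].

Lemma sq_eq (p q : R) : 0 <= p -> 0 <= q -> p ^+ 2 = q ^+ 2 -> p = q.
Proof. by move=> p0 q0 /eqP; rewrite eqrXn2 // => /eqP. Qed.

Lemma wit_B1 : Wit B1 (eta4 R).
Proof.
set w := Num.sqrt (19 : R).
have w0 : 0 <= w by exact: sqrtr_ge0.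
have w2 : w ^+ 2 = 19 by rewrite sqr_sqrtr.
have w7 : w < 7 by nra.
set s := Num.sqrt ((10 - w) / 30).
have s0 : 0 <= s by exact: sqrtr_ge0.
have s2 : s ^+ 2 = (10 - w) / 30 by rewrite sqr_sqrtr //; lra.
set t := Num.sqrt ((5 + w) / 15).
have t0 : 0 <= t by exact: sqrtr_ge0.
have t2 : t ^+ 2 = (5 + w) / 15 by rewrite sqr_sqrtr //; lra.
set u := Num.sqrt ((8 + w) / 30).
have u0 : 0 <= u by exact: sqrtr_ge0.
have u2 : u ^+ 2 = (8 + w) / 30 by rewrite sqr_sqrtr //; lra.
set v := Num.sqrt ((7 - w) / 15).
have v0 : 0 <= v by exact: sqrtr_ge0.
have v2 : v ^+ 2 = (7 - w) / 15 by rewrite sqr_sqrtr //; lra.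
set eta := eta4 R.
have eta0 : 0 <= eta by rewrite /eta /eta4 divr_ge0 ?sqrtr_ge0.
have eta2 : eta ^+ 2 = (169 + 38 * w) / 225.
  rewrite /eta /eta4 -/w expr_div_n sqr_sqrtr; first by lra.
  by rewrite addr_ge0 ?mulr_ge0.
set a := s * u; set b := t * v.
have a0 : 0 <= a by rewrite mulr_ge0.
have b0 : 0 <= b by rewrite mulr_ge0.
have a2 : a ^+ 2 = (61 + 2 * w) / 900 by rewrite exprMn s2 u2; lra.
have b2 : b ^+ 2 = (16 + 2 * w) / 225 by rewrite exprMn t2 v2; lra.
have tu2 : (t * u) ^+ 2 = (59 + 13 * w) / 450 by rewrite exprMn t2 u2; lra.
have ae : a * eta = (83 + 16 * w) / 450.
  apply: sq_eq; [by rewrite mulr_ge0|lra|].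
  by rewrite exprMn a2 eta2; lra.
have ab : a * b = (11 + 7 * w) / 450.
  apply: sq_eq; [by rewrite mulr_ge0|lra|].
  by rewrite exprMn a2 b2; lra.
set N := eta - a.
have N2 : N ^+ 2 = (a + b) ^+ 2 + 2 * (t * u) ^+ 2.
  rewrite /N tu2; lra.
have Npos : 0 < N.
  rewrite /N; nra.
have Nn : N != 0 by rewrite gt_eqF.
exists id, id, ((a + b) / N), (t * u / N), (fun k : 'I_3 => if val k == 1%N then t else s),
  (fun k : 'I_3 => if val k == 1%N then v else u).
split.
- by split => ? ? ->.
- have -> : ((a + b) / N) ^+ 2 + 2 * (t * u / N) ^+ 2 =
     ((a + b) ^+ 2 + 2 * (t * u) ^+ 2) / N ^+ 2 by field.
  by rewrite -N2 divff // expf_neq0.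
- by rewrite sum3 /= s2 t2; lra.
- by rewrite sum3 /= u2 v2; lra.
rewrite !sum3 /Umx /B1 /mx33 /=.
rewrite [X in _ <= X](_ : _ = eta) //.
transitivity (a + ((a + b) ^+ 2 + 2 * (t * u) ^+ 2) / N).
  by rewrite /a /b; field.
by rewrite -N2 expr2 mulfK // /N addrC subrK.
Qed.

Definition pm120 (k : 'I_3) : 'I_3 := if val k == 0%N then o1 else if val k == 1%N then o2 else o0.
Definition pm210 (k : 'I_3) : 'I_3 := if val k == 0%N then o2 else if val k == 1%N then o1 else o0.

Lemma pm120_inj : injective pm120.
Proof.
move=> [[|[|[|k]]] hk] [[|[|[|k']]] hk'] //= /(congr1 (@nat_of_ord 3)) //= _;
  by apply: val_inj.
Qed.

Lemma pm210_inj : injective pm210.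
Proof.
move=> [[|[|[|k]]] hk] [[|[|[|k']]] hk'] //= /(congr1 (@nat_of_ord 3)) //= _;
  by apply: val_inj.
Qed.

Lemma eta_le : eta4 R <= 123 / 100.
Proof.
set w := Num.sqrt (19 : R).
have w0 : 0 <= w by exact: sqrtr_ge0.
have w2 : w ^+ 2 = 19 by rewrite sqr_sqrtr.
have eta0 : 0 <= eta4 R by rewrite /eta4 divr_ge0 ?sqrtr_ge0.
have eta2 : eta4 R ^+ 2 = (169 + 38 * w) / 225.
  rewrite /eta4 -/w expr_div_n sqr_sqrtr; first by lra.
  by rewrite addr_ge0 ?mulr_ge0.
have wle : w <= 9 / 2.
  rewrite /w -[9 / 2 : R]ger0_norm // -sqrtr_sqr ler_sqrt //; lra.
have e2 : eta4 R ^+ 2 <= (123 / 100) ^+ 2 by rewrite eta2; lra.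
by rewrite -(@ler_pXn2r _ 2) // ?nnegrE.
Qed.

Lemma wit_B2 : Wit B2 (eta4 R).
Proof.
exists pm120, pm120, (161 / 2339), (1650 / 2339),
  (fun k : 'I_3 => nth 0 [:: 3 / 4; 43 / 100; - (1 / 2)] k),
  (fun k : 'I_3 => nth 0 [:: 3 / 4; - (43 / 100); - (1 / 2)] k).
split.
- by split; exact: pm120_inj.
- lra.
- by rewrite sum3 /=; lra.
- by rewrite sum3 /=; lra.
apply: le_trans eta_le _.
rewrite !sum3 /Umx /B2 /mx33 /pm120 /=.
lra.
Qed.

Lemma wit_B3 : Wit B3 (eta4 R).
Proof.
exists pm210, id, (7 / 43), (- (30 / 43)),
  (fun k : 'I_3 => nth 0 [:: - (1 / 2); - (7 / 10); - (1 / 2)] k),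
  (fun k : 'I_3 => nth 0 [:: 1 / 2; - (7 / 10); 1 / 2] k).
split.
- by split; [exact: pm210_inj | move=> ? ? ->].
- lra.
- by rewrite sum3 /=; lra.
- by rewrite sum3 /=; lra.
apply: le_trans eta_le _.
rewrite !sum3 /Umx /B3 /mx33 /pm210 /=.
lra.
Qed.
End Wit.

End Part4.
Import Part4.

Module Part5.
Set Implicit Arguments.
Unset Strict Implicit.
Unset Printing Implicit Defensive.
Local Open Scope ring_scope.

Lemma Umx_tr (R : realType) (c e : R) a b : Umx c (- e) a b = Umx c e b a.
Proof.
by case: a => [[|[|[|?]]] ?]; case: b => [[|[|[|?]]] ?]; rewrite /Umx /= ?opprK.
Qed.

Lemma wit_schur (R : realType) (I J : countType) (E : I -> J -> bool) (S : \bar R)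
  (M : 'I_3 -> 'I_3 -> bool) (eta : R)
  (HLB : forall (f : 'I_3 -> I) (g : 'I_3 -> J), injective f -> injective g ->
     forall (c e : R) (y x : 'I_3 -> R), c ^+ 2 + 2 * e ^+ 2 = 1 ->
     \sum_a y a ^+ 2 <= 1 -> \sum_b x b ^+ 2 <= 1 ->
     ((\sum_a \sum_b y a * (if E (f a) (g b) then Umx c e a b else 0) * x b)%:E <= S)%E) :
  Wit M eta -> has_induced E M -> (eta%:E <= S)%E.
Proof.
move=> [sg [tu [c [e [y [x [[sgi tui] Hce Hy Hx Hv]]]]]]] [f [g [fi [gi [H|H]]]]].
- apply: le_trans (HLB (f \o sg) (g \o tu) (inj_comp fi sgi) (inj_comp gi tui) c e y x Hce Hy Hx).
  rewrite lee_fin; apply: le_trans Hv _; rewrite le_eqVlt; apply/orP; left; apply/eqP.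
  by apply: eq_bigr => a _; apply: eq_bigr => b _; rewrite /= H.
- have Hce' : c ^+ 2 + 2 * (- e) ^+ 2 = 1 by rewrite sqrrN.
  apply: le_trans (HLB (f \o tu) (g \o sg) (inj_comp fi tui) (inj_comp gi sgi) c (- e) x y Hce' Hx Hy).
  rewrite lee_fin; apply: le_trans Hv _; rewrite le_eqVlt; apply/orP; left; apply/eqP.
  rewrite exchange_big /=.
  apply: eq_bigr => a _; apply: eq_bigr => b _; rewrite H Umx_tr.
  by case: (M (sg b) (tu a)); [ring | rewrite !mulr0 !mul0r].
Qed.

Section Inst.
Variable R : realType.
Local Open Scope complex_scope.

Lemma normc_real (r : R) : Normc.normc (r%:C) = `|r|.
Proof. by rewrite /= expr0n addr0 sqrtr_sqr. Qed.

Lemma normc_ge0 (z : R[i]) : 0 <= Normc.normc z.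
Proof. by case: z => a b /=; exact: sqrtr_ge0. Qed.

Lemma normc_conj (z : R[i]) : Normc.normc (conjc z) = Normc.normc z.
Proof. by case: z => a b /=; rewrite sqrrN. Qed.

Lemma H3R (c e : R) : c ^+ 2 + 2 * e ^+ 2 = 1 -> forall y x : 'I_3 -> R,
  \sum_a `|y a| ^+ 2 <= 1 -> \sum_b `|x b| ^+ 2 <= 1 ->
  `|\sum_a \sum_b id (y a) * idfun (Umx c e a b) * x b| <= 1.
Proof.
move=> Hce y x Hy Hx.
have := @H3C R c e Hce (fun a => (y a)%:C) (fun b => (x b)%:C).
rewrite !(eq_bigr _ (fun a _ => congr1 (fun t => t ^+ 2) (normc_real _))) => /(_ Hy Hx).
have -> : \sum_a \sum_b conjc (y a)%:C * (Umx c e a b)%:C * (x b)%:C =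
   (\sum_a \sum_b y a * Umx c e a b * x b)%:C.
  rewrite rmorph_sum; apply: eq_bigr => a _; rewrite rmorph_sum; apply: eq_bigr => b _.
  by rewrite conjc_real !rmorphM.
by rewrite normc_real.
Qed.

Lemma lower_all (cplx : bool) (I J : countType) (E : I -> J -> bool) :
  has_induced E B1 \/ has_induced E B2 \/ has_induced E B3 ->
  ((eta4 R)%:E <= schur_norm R cplx E)%E.
Proof.
have HLB : forall (f : 'I_3 -> I) (g : 'I_3 -> J), injective f -> injective g ->
     forall (c e : R) (y x : 'I_3 -> R), c ^+ 2 + 2 * e ^+ 2 = 1 ->
     \sum_a y a ^+ 2 <= 1 -> \sum_b x b ^+ 2 <= 1 ->
     ((\sum_a \sum_b y a * (if E (f a) (g b) then Umx c e a b else 0) * x b)%:E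
        <= schur_norm R cplx E)%E.
  move=> f g fi gi c e y x Hce Hy Hx; rewrite /schur_norm; case: cplx.
  - apply: (@LB R R[i] (@Normc.normc R) conjc (real_complex R)) => //;
    first [ exact: normc_ge0 | exact: Normc.normcM | exact: le_normcD
               | exact: Normc.normc0 | exact: normc_conj | exact: conjc0 | exact: conjc1
               | exact: conjc_real | exact: normc_real | exact: H3C ].
  - apply: (@LB R R (fun x : R => `|x|) id idfun) => //;
    first [ exact: normrM | exact: ler_normD | exact: normr0 | exact: H3R ].
move=> [H|[H|H]].
- exact: wit_schur HLB (wit_B1 R) H.
- exact: wit_schur HLB (wit_B2 R) H.
- exact: wit_schur HLB (wit_B3 R) H.
Qed.

Lemma upper_deg1 (cplx : bool) (I J : countType) (E : I -> J -> bool) :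
  ~ some_deg_ge E 2 -> (schur_norm R cplx E <= 1%:E)%E.
Proof.
move=> nd.
have pair : forall (T : Type) (j j' : T), j <> j' -> injective (fun t : 'I_2 => if t == ord0 then j else j').
  move=> T j j' ne [[|[|?]] ?] [[|[|?]] ?] //= h;
  first [ by apply: val_inj | by case: (ne h) | by case: (ne (esym h)) ].
have HR : forall i j j', E i j -> E i j' -> j = j'.
  move=> i j j' h h'; apply: contrapT => ne; apply: nd; left; exists i.
  exists (fun t : 'I_2 => if t == ord0 then j else j'); split; first exact: pair.
  by move=> t; case: (t == ord0).
have HC : forall i i' j, E i j -> E i' j -> i = i'.
  move=> i i' j h h'; apply: contrapT => ne; apply: nd; right; exists j.
  exists (fun t : 'I_2 => if t == ord0 then i else i'); split; first exact: pair.
  by move=> t; case: (t == ord0).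
rewrite /schur_norm; case: cplx.
- apply: (@MB R R[i] (@Normc.normc R) conjc (real_complex R)) => //;
    first [ exact: normc_ge0 | exact: Normc.normcM | exact: le_normcD
               | exact: Normc.normc0 | exact: normc_conj | exact: conjc0 | exact: conjc1
               | exact: conjc_real | exact: normc_real | exact: H3C ].
- apply: (@MB R R (fun x : R => `|x|) id idfun) => //;
    first [ exact: normrM | exact: ler_normD | exact: normr0 | exact: H3R ].
Qed.
End Inst.


End Part5.
Import Part5.

Unset Implicit Arguments.
Local Open Scope ring_scope.

Theorem lemma6p3 (R : realType) (Rv Cv : countType) (E : Rv -> Cv -> bool)
  (hR : exists r : Rv, True) (hC : exists c : Cv, True)
  (htf : twin_free E) :
  (some_deg_ge E 3 ->
     has_induced E B1 \/ has_induced E B2 \/ has_induced E B3) /\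
  (forall cplx : bool,
     (1%:E < schur_norm R cplx E)%E -> (schur_norm R cplx E < (eta4 R)%:E)%E ->
     maxdeg_eq2 E).
Proof.
split; first exact: part1.
move=> cplx H1 H2; split.
- move=> /(part1 htf) /(lower_all R cplx) H.
  by have := lt_le_trans H2 H; rewrite ltxx.
- apply: contrapT => nd.
  have := upper_deg1 R cplx nd => H.
  by have := lt_le_trans H1 H; rewrite ltxx.
Qed.
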